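(* For all $x\in\mathbb{C}$ with $x\neq 0$ and all integers $n\ge0$, \[ \sum_{k=0}^n 2^k\frac{L_k(x)}{x^k}=2^{n+1}\frac{F_{n+1}(x)}{x^n}, \] and, if moreover $x\neq\pm 2i$, \[ \sum_{k=0}^n 2^k\frac{F_k(x)}{x^k}=\frac{x}{x^2+4}\Big(2^{n+1}\frac{L_{n+1}(x)}{x^{n+1}}-2\Big). \]
   Context: The Fibonacci polynomials $F_n(x)$ and Lucas polynomials $L_n(x)$ are defined by $F_0(x)=0$, $F_1(x)=1$, $L_0(x)=2$, $L_1(x)=x$ and $W_n(x)=xW_{n-1}(x)+W_{n-2}(x)$ for $n\ge2$ (for $W=F$ and $W=L$). Here $i=\sqrt{-1}$. *)

(* Defs.v *)
From mathcomp Require Import all_boot all_order all_algebra.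
From mathcomp Require Import complex.
From mathcomp Require Import reals Rstruct.
Set Implicit Arguments. Unset Strict Implicit. Unset Printing Implicit Defensive.
Import Order.TTheory GRing.Theory Num.Theory.
Local Open Scope ring_scope.

Notation C := (complex Rdefinitions.R).

Fixpoint fibP {T : pzRingType} (n : nat) (x : T) : T :=
  match n with
  | 0 => 0
  | 1 => 1
  | (m.+1 as n1).+1 => x * fibP n1 x + fibP m x
  end.

Fixpoint lucP {T : pzRingType} (n : nat) (x : T) : T :=
  match n with
  | 0 => 2
  | 1 => x
  | (m.+1 as n1).+1 => x * lucP n1 x + lucP m x
  end.

(* Main.v *)
Require Import Defs.
From mathcomp Require Import all_boot all_order all_algebra.
From mathcomp Require Import complex.
From mathcomp Require Import reals Rstruct.
From mathcomp Require Import ring.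
Import GRing.Theory Num.Theory.
Local Open Scope ring_scope.

Lemma fibSS (x : C) n : fibP n.+2 x = x * fibP n.+1 x + fibP n x.
Proof. by []. Qed.
Lemma lucSS (x : C) n : lucP n.+2 x = x * lucP n.+1 x + lucP n x.
Proof. by []. Qed.

Lemma id1 (x : C) n : lucP n.+1 x = fibP n.+2 x + fibP n x /\
  lucP n.+2 x = fibP n.+3 x + fibP n.+1 x.
Proof.
elim: n => [|n [IH1 IH2]].
  split; rewrite /=; ring.
split => //.
rewrite lucSS IH1 IH2 (fibSS x n.+2) (fibSS x n).
ring.
Qed.

Lemma id2 (x : C) n : x * lucP n.+1 x + 2 * lucP n x = (x ^+ 2 + 4) * fibP n.+1 x /\
  x * lucP n.+2 x + 2 * lucP n.+1 x = (x ^+ 2 + 4) * fibP n.+2 x.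
Proof.
elim: n => [|n [IH1 IH2]].
  split; rewrite /=; ring.
split => //.
rewrite (lucSS x n.+1) (fibSS x n.+1) lucSS.
transitivity (x * (x * lucP n.+2 x + 2 * lucP n.+1 x) + (x * lucP n.+1 x + 2 * lucP n x)).
  rewrite lucSS; ring.
rewrite IH1 IH2; ring.
Qed.

Lemma sumS (F : nat -> C) n :
  \sum_(0 <= k < n.+2) F k = \sum_(0 <= k < n.+1) F k + F n.+1.
Proof. by rewrite big_nat_recr. Qed.

Theorem corollary5 (x : C) (n : nat) : x != 0 ->
  (\sum_(0 <= k < n.+1) 2 ^+ k * lucP k x / x ^+ k
     = 2 ^+ n.+1 * fibP n.+1 x / x ^+ n) /\
  (x != 2 * 'i -> x != - (2 * 'i) ->
   \sum_(0 <= k < n.+1) 2 ^+ k * fibP k x / x ^+ k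
     = x / (x ^+ 2 + 4) * (2 ^+ n.+1 * lucP n.+1 x / x ^+ n.+1 - 2)).
Proof.
move=> x0; split.
  elim: n => [|n IH].
    by rewrite big_nat1 /=; field.
  rewrite sumS IH.
  have := (id1 x n).1 => h.
  rewrite h (fibSS x n).
  have xn : x ^+ n != 0 by rewrite expf_neq0.
  rewrite !exprS; field; rewrite xn x0 //.
move=> h1 h2.
have h4 : x ^+ 2 + 4 != 0.
  have -> : x ^+ 2 + 4 = (x - 2 * 'i) * (x + 2 * 'i).
    have hi : ('i : C) * 'i = -1 by rewrite -expr2 sqrCi.
    transitivity (x ^+ 2 - (2 * 2) * ('i * 'i)); first by rewrite hi; ring.
    ring.
  rewrite mulf_neq0 //; first by rewrite subr_eq0.
  by rewrite -[2 * 'i]opprK subr_eq0.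
suff: (x ^+ 2 + 4) * \sum_(0 <= k < n.+1) 2 ^+ k * fibP k x / x ^+ k
   = 2 ^+ n.+1 * lucP n.+1 x / x ^+ n - 2 * x.
  move=> H; apply: (mulfI h4); rewrite H.
  have xn : x ^+ n != 0 by rewrite expf_neq0.
  rewrite exprS [x ^+ n.+1]exprS; field; rewrite h4 xn x0 //.
elim: n => [|n IH].
  by rewrite big_nat1 /=; field.
rewrite sumS mulrDr IH.
have := (id2 x n).1 => h.
have xn : x ^+ n != 0 by rewrite expf_neq0.
have e : (x ^+ 2 + 4) * fibP n.+1 x = x * lucP n.+1 x + 2 * lucP n x by rewrite h.
rewrite (lucSS x n) !(exprS _ n.+1) !(exprS _ n).
move: e; move: (x ^+ n) xn (2 ^+ n) (fibP n.+1 x) (lucP n.+1 x) (lucP n x) (x ^+ 2 + 4) => y yn a f l1 l0 q e.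
transitivity (2 * a * l1 / y - 2 * x + 2 * a * (q * f) / (x * y)).
  by field; rewrite yn x0.
by rewrite e; field; rewrite yn x0.
Qed.
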